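(* Let $g:\mathbb{R}^n\to\mathbb{R}^n$ be convex, order-preserving and additively homogeneous. Assume that $u\in\mathbb{R}^n$ is harmonic with respect to $g$, i.e. $g(u)=u$. Let $C\subseteq[n]$ be the set of critical nodes of $g$ and $N=[n]\setminus C$. Define $h:\mathbb{R}^N\to\mathbb{R}^N$ by $h(y):=\big(g(\imath_N(y,u_C))\big)_N$, i.e. $h(y)$ is the restriction to $N$ of $g$ applied to the vector whose $N$-coordinates are $y$ and whose $C$-coordinates are those of $u$. Then $h$ has a unique fixed point.
   Context: $[n]=\{1,\dots,n\}$. A map $g:\mathbb{R}^n\to\mathbb{R}^n$ is order-preserving if $x\le y$ (coordinatewise) implies $g(x)\le g(y)$; additively homogeneous if $g(\lambda+x)=\lambda+g(x)$ for all $\lambda\in\mathbb{R}$, $x\in\mathbb{R}^n$ (where $\lambda+x$ adds $\lambda$ to each coordinate); convex if each coordinate $g_i$ is a convex function. A vector $u$ is harmonic for $g$ if $g(u)=u$ and super-harmonic if $g(u)\le u$. The subdifferential of $g$ at $u$ is $\partial g(u)=\{M\in\mathbb{R}^{n\times n}: g(x)-g(u)\ge M(x-u)\ \forall x\in\mathbb{R}^n\}$; for $g$ order-preserving and additively homogeneous its elements are stochastic matrices. For a subset $I\subseteq[n]$ and $x\in\mathbb{R}^n$, $x_I$ is the restriction of $x$ to coordinates in $I$, $M_{IJ}$ the $I\times J$ submatrix of $M$, and for $J=[n]\setminus I$, $\imath_I(y,z)$ denotes the vector of $\mathbb{R}^n$ with $I$-coordinates $y$ and $J$-coordinates $z$.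 A recurrence class of a matrix $M$ is a final communication class $F$ of $M$ (a strongly connected class of the graph of nonzero entries of $M$ with no arc leaving it) such that $M_{FF}$ is stochastic. A node $i\in[n]$ is critical for $g$ (which has harmonic vector $u$) if it belongs to a recurrence class of some $M\in\partial g(u)$; this set does not depend on the choice of the harmonic vector $u$. *)

(* Defs.v *)
From HB Require Import structures.
From mathcomp Require Import all_boot all_order all_algebra.
From mathcomp Require Import reals.
Set Implicit Arguments. Unset Strict Implicit. Unset Printing Implicit Defensive.
Import Order.TTheory GRing.Theory Num.Theory.
Local Open Scope ring_scope.

Section Defs.
Variables (R : realType) (n : nat).
Notation vec := ('I_n -> R).

Definition order_preserving (g : vec -> vec) : Prop :=
  forall x y : vec, (forall i, x i <= y i) -> forall i, g x i <= g y i.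

Definition additively_homogeneous (g : vec -> vec) : Prop :=
  forall (l : R) (x : vec) i, g (fun j => l + x j) i = l + g x i.

Definition convex_map (g : vec -> vec) : Prop :=
  forall (x y : vec) (t : R), 0 <= t -> t <= 1 -> forall i,
    g (fun j => t * x j + (1 - t) * y j) i <= t * g x i + (1 - t) * g y i.

Definition subdiff (g : vec -> vec) (u : vec) (M : 'M[R]_n) : Prop :=
  forall (x : vec) i, \sum_(j < n) M i j * (x j - u j) <= g x i - g u i.

Definition mx_graph (M : 'M[R]_n) : rel 'I_n := fun i j => M i j != 0.

Definition comm_class (M : 'M[R]_n) (F : {set 'I_n}) : Prop :=
  exists i, F = [set j | connect (mx_graph M) i j && connect (mx_graph M) j i].

Definition final_class (M : 'M[R]_n) (F : {set 'I_n}) : Prop :=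
  comm_class M F /\ forall i j, i \in F -> M i j != 0 -> j \in F.

Definition stochastic_on (M : 'M[R]_n) (F : {set 'I_n}) : Prop :=
  (forall i j, i \in F -> j \in F -> 0 <= M i j) /\
  (forall i, i \in F -> \sum_(j in F) M i j = 1).

Definition recurrence_class (M : 'M[R]_n) (F : {set 'I_n}) : Prop :=
  final_class M F /\ stochastic_on M F.

Definition critical (g : vec -> vec) (u : vec) (i : 'I_n) : Prop :=
  exists M : 'M[R]_n, subdiff g u M /\
    exists F : {set 'I_n}, recurrence_class M F /\ i \in F.

(* i_N(y, z_C): N-coordinates from y, others from z *)
Definition glue (N : {set 'I_n}) (y : {i : 'I_n | i \in N} -> R) (z : vec) : vec :=
  fun i => match @insub _ (fun k => k \in N) {i : 'I_n | i \in N} i with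
           | Some k => y k
           | None => z i
           end.

Definition restr_map (g : vec -> vec) (u : vec) (N : {set 'I_n})
  (y : {i : 'I_n | i \in N} -> R) : {i : 'I_n | i \in N} -> R :=
  fun k => g (glue y u) (val k).

End Defs.

(* Main.v *)
Require Import Defs.
From HB Require Import structures.
From mathcomp Require Import all_boot all_order all_algebra.
From mathcomp Require Import reals.
From mathcomp Require Import ring lra.
From Stdlib Require Import FunctionalExtensionality.
Set Implicit Arguments. Unset Strict Implicit. Unset Printing Implicit Defensive.
Import Order.TTheory GRing.Theory Num.Theory.
Local Open Scope ring_scope.

Section HBsec.
Variables (R : realType) (n : nat).
Notation vec := ('I_n -> R).

Definition infT (P : R -> Prop) (a : R -> R) : R :=
  inf (fun x => exists t, P t /\ x = a t).

Lemma infT_le P a t b : (forall t, P t -> b <= a t) -> P t -> infT P a <= a t.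
Proof.
move=> hb Pt; apply: (ge_inf (E := fun x => exists t, P t /\ x = a t)).
- exists b => x [s [Ps ->]]; exact: hb.
- by exists t.
Qed.

Lemma le_infT P a x : (exists t, P t) -> (forall t, P t -> x <= a t) -> x <= infT P a.
Proof.
move=> [t Pt] h; apply: lb_le_inf; first by exists (a t), t.
by move=> y [s [Ps ->]]; exact: h.
Qed.

Definition vadd (v w : vec) : vec := fun j => v j + w j.
Definition vscale (s : R) (v : vec) : vec := fun j => s * v j.
Definition vopp (v : vec) : vec := fun j => - v j.
Definition vzero : vec := fun _ => 0.

Definition sublin (q : vec -> R) :=
  (forall v w, q (vadd v w) <= q v + q w) /\
  (forall s v, 0 < s -> q (vscale s v) <= s * q v).

Ltac fext := apply: functional_extensionality => ?; rewrite /vadd /vscale /vopp /vzero.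

Lemma sublin0 q : sublin q -> q vzero = 0.
Proof.
move=> [ha hs].
have e1 : vadd vzero vzero = vzero by fext; rewrite addr0.
have e2 : vscale (2^-1) vzero = vzero by fext; rewrite mulr0.
have := ha vzero vzero; rewrite e1 => h1.
have := hs (2^-1) vzero; rewrite e2 invr_gt0 => /(_ ltac:(by [])) h2.
lra.
Qed.

Lemma sublin_hom q s v : sublin q -> 0 <= s -> q (vscale s v) = s * q v.
Proof.
move=> sq; have q0 := sublin0 sq; case: sq => [ha hs].
rewrite le_eqVlt => /orP [/eqP <-|s0].
  have -> : vscale 0 v = vzero by fext; rewrite mul0r.
  by rewrite q0 mul0r.
apply/eqP; rewrite eq_le hs //=.
have := hs s^-1 (vscale s v); rewrite invr_gt0 => /(_ s0).
have -> : vscale s^-1 (vscale s v) = v by fext; rewrite mulrA mulVf ?mul1r // gt_eqF.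
have si : 0 < s^-1 by rewrite invr_gt0.
move=> h; rewrite -(ler_pM2l si) mulrA mulVf ?mul1r ?gt_eqF //.
Qed.

Lemma sublin_opp q v : sublin q -> 0 <= q v + q (vopp v).
Proof.
move=> sq; rewrite -(sublin0 sq); case: sq => [ha _].
have <- : vadd v (vopp v) = vzero by fext; rewrite subrr.
exact: ha.
Qed.

Definition Tq (w : vec) (q : vec -> R) (v : vec) : R :=
  infT (fun t => 0 <= t) (fun t => q (vadd v (vscale t w)) - t * q w).

Lemma Tq_lb q w v t : sublin q -> 0 <= t ->
  - q (vopp v) <= q (vadd v (vscale t w)) - t * q w.
Proof.
move=> sq t0; rewrite -(sublin_hom w sq t0).
have := sq.1 (vadd v (vscale t w)) (vopp v).
have -> : vadd (vadd v (vscale t w)) (vopp v) = vscale t w.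
  by fext; rewrite addrAC subrr add0r.
lra.
Qed.

Lemma Tq_le q w v t : sublin q -> 0 <= t ->
  Tq w q v <= q (vadd v (vscale t w)) - t * q w.
Proof.
move=> sq t0; apply: infT_le t0 => s s0; exact: Tq_lb.
Qed.

Lemma Tq_ge q w v x : (forall t, 0 <= t -> x <= q (vadd v (vscale t w)) - t * q w) ->
  x <= Tq w q v.
Proof. by move=> h; apply: le_infT => //; exists 0. Qed.

Lemma Tq_le_q q w v : sublin q -> Tq w q v <= q v.
Proof.
move=> sq; have := @Tq_le q w v 0 sq (lexx 0).
have -> : vadd v (vscale 0 w) = v by fext; rewrite mul0r addr0.
by rewrite mul0r subr0.
Qed.

Lemma Tq_opp q w : sublin q -> Tq w q (vopp w) <= - q w.
Proof.
move=> sq; have := @Tq_le q w (vopp w) 1 sq ler01.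
have -> : vadd (vopp w) (vscale 1 w) = vzero by fext; rewrite mul1r addNr.
by rewrite (sublin0 sq) mul1r sub0r.
Qed.

Lemma Tq_sublin q w : sublin q -> sublin (Tq w q).
Proof.
move=> sq; split.
- move=> v1 v2.
  have key : forall t1 t2, 0 <= t1 -> 0 <= t2 ->
      Tq w q (vadd v1 v2) <= (q (vadd v1 (vscale t1 w)) - t1 * q w)
                            + (q (vadd v2 (vscale t2 w)) - t2 * q w).
    move=> t1 t2 t10 t20.
    apply: le_trans (@Tq_le q w (vadd v1 v2) _ sq (addr_ge0 t10 t20)) _.
    have -> : vadd (vadd v1 v2) (vscale (t1 + t2) w) =
              vadd (vadd v1 (vscale t1 w)) (vadd v2 (vscale t2 w)).
      by fext; rewrite mulrDl; ring.
    have := sq.1 (vadd v1 (vscale t1 w)) (vadd v2 (vscale t2 w)); lra.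
  have h2 : forall t2, 0 <= t2 -> Tq w q (vadd v1 v2) -
      (q (vadd v2 (vscale t2 w)) - t2 * q w) <= Tq w q v1.
    move=> t2 t20; apply: Tq_ge => t1 t10; have := key t1 t2 t10 t20; lra.
  suff : Tq w q (vadd v1 v2) - Tq w q v1 <= Tq w q v2 by lra.
  apply: Tq_ge => t2 t20; have := h2 t2 t20; lra.
- move=> s v s0.
  suff : s^-1 * Tq w q (vscale s v) <= Tq w q v.
    by rewrite -(ler_pM2l s0) mulrA mulfV ?mul1r ?gt_eqF.
  apply: Tq_ge => t t0.
  rewrite -(ler_pM2l s0) mulrA mulfV ?mul1r ?gt_eqF //.
  have st0 : 0 <= s * t by rewrite mulr_ge0 // ltW.
  apply: le_trans (@Tq_le q w (vscale s v) _ sq st0) _.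
  rewrite mulrBr -(sublin_hom _ sq (ltW s0)).
  have -> : vscale s (vadd v (vscale t w)) = vadd (vscale s v) (vscale (s * t) w).
    by fext; rewrite mulrDr mulrA.
  by rewrite mulrA.
Qed.


Definition Titer (ws : seq vec) (q : vec -> R) : vec -> R :=
  foldl (fun r w => Tq w r) q ws.

Fixpoint allp (P : vec -> Prop) (s : seq vec) : Prop :=
  match s with [::] => True | w :: s' => P w /\ allp P s' end.

Lemma allp_map (P : vec -> Prop) (f : 'I_n -> vec) s :
  allp P (map f s) -> forall x, x \in s -> P (f x).
Proof.
elim: s => //= a s IH [Pa Ps] x; rewrite inE => /orP [/eqP -> //|]; exact: IH.
Qed.

Lemma Titer_spec ws q : sublin q ->
  [/\ sublin (Titer ws q), (forall v, Titer ws q v <= q v) &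
      allp (fun w => Titer ws q w + Titer ws q (vopp w) <= 0) ws].
Proof.
elim: ws q => [|w ws IH] q sq /=; first by split.
have sT := Tq_sublin w sq.
have [s1 le1 all1] := IH _ sT.
rewrite /Titer /= -/(Titer ws (Tq w q)).
split=> //.
- move=> v; exact: le_trans (le1 v) (Tq_le_q w v sq).
- split=> //.
  have h1 := le_trans (le1 w) (Tq_le_q w w sq).
  have h2 := le_trans (le1 (vopp w)) (Tq_opp w sq).
  lra.
Qed.

Definition ev (j : 'I_n) : vec := fun k => (k == j)%:R.
Definition dot (p v : vec) : R := \sum_j p j * v j.

Definition vsum (s : seq vec) : vec := foldr vadd vzero s.

Lemma vsum_le r s : sublin r -> r (vsum s) <= \sum_(w <- s) r w.
Proof.
move=> sr; elim: s => [|w s IH] /=; first by rewrite big_nil (sublin0 sr).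
rewrite big_cons; apply: le_trans (sr.1 _ _) _; by rewrite lerD2l.
Qed.

Lemma vsum_map (f : 'I_n -> vec) s k : vsum (map f s) k = \sum_(j <- s) f j k.
Proof.
elim: s => [|a s IH] /=; first by rewrite big_nil.
by rewrite big_cons /vadd IH.
Qed.

Lemma scale_le r x c : sublin r -> r x + r (vopp x) <= 0 -> r (vscale c x) <= c * r x.
Proof.
move=> sr hx; case: (lerP 0 c) => c0; first by rewrite sublin_hom.
have -> : vscale c x = vscale (- c) (vopp x) by fext; rewrite mulrNN.
rewrite (sublin_hom _ sr); last by rewrite oppr_ge0 ltW.
have h : - c * r (vopp x) <= - c * (- r x).
  by apply: ler_wpM2l; [rewrite oppr_ge0 ltW | lra].
by rewrite mulrNN in h.
Qed.

Lemma linear_r r : sublin r -> (forall j, r (ev j) + r (vopp (ev j)) <= 0) ->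
  forall v, r v = dot (fun j => r (ev j)) v.
Proof.
move=> sr hj.
have up : forall v, r v <= dot (fun j => r (ev j)) v.
  move=> v.
  have ev_sum : v = vsum (map (fun j => vscale (v j) (ev j)) (index_enum 'I_n)).
    apply: functional_extensionality => k; rewrite vsum_map /vscale /ev.
    rewrite (bigD1 k) //= eqxx mulr1 big1 ?addr0 // => j /negbTE.
    by rewrite eq_sym => ->; rewrite mulr0.
  rewrite {1}ev_sum; apply: le_trans (vsum_le _ sr) _; rewrite big_map /dot.
  apply: ler_sum => j _; rewrite mulrC; exact: scale_le.
move=> v; apply/eqP; rewrite eq_le up /=.
have h1 := up (vopp v); have h2 := sublin_opp v sr.
have e : dot (fun j => r (ev j)) (vopp v) = - dot (fun j => r (ev j)) v.
  by rewrite /dot /vopp -sumrN; apply: eq_bigr => j _; rewrite mulrN.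
rewrite e in h1; lra.
Qed.

Lemma hahn_banach q d : sublin q -> exists p, (forall v, dot p v <= q v) /\ q d <= dot p d.
Proof.
move=> sq; have s1 := Tq_sublin d sq.
have [sr ler allr] := Titer_spec (map ev (index_enum 'I_n)) s1.
set r := Titer _ _ in sr ler allr.
have hj : forall j, r (ev j) + r (vopp (ev j)) <= 0.
  by move=> j; apply: (allp_map allr); rewrite mem_index_enum.
exists (fun j => r (ev j)); have lin := linear_r sr hj.
split.
  by move=> v; rewrite -lin; exact: le_trans (ler v) (Tq_le_q d v sq).
rewrite -lin; have := sublin_opp d sr; have := ler (vopp d); have := Tq_opp d sq.
lra.
Qed.

End HBsec.

Section DD.
Variables (R : realType) (n : nat).
Notation vec := ('I_n -> R).
Ltac fext := apply: functional_extensionality => ?; rewrite /vadd /vscale /vopp /vzero.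

Definition cvx (f : vec -> R) := forall (x y : vec) (t : R), 0 <= t -> t <= 1 ->
  f (fun j => t * x j + (1 - t) * y j) <= t * f x + (1 - t) * f y.

Definition ratioF (f : vec -> R) (u v : vec) (t : R) := (f (vadd u (vscale t v)) - f u) / t.

Definition dd (f : vec -> R) (u v : vec) : R := infT (fun t => 0 < t) (ratioF f u v).

Lemma ratio_mono f u v s t : cvx f -> 0 < s -> s <= t -> ratioF f u v s <= ratioF f u v t.
Proof.
move=> cf s0 st; have t0 : 0 < t by exact: lt_le_trans st.
set l := s / t.
have l0 : 0 <= l by rewrite /l divr_ge0 // ltW.
have l1 : l <= 1 by rewrite /l ler_pdivrMr // mul1r.
have := cf (vadd u (vscale t v)) u l l0 l1.
have -> : (fun j => l * vadd u (vscale t v) j + (1 - l) * u j) = vadd u (vscale s v).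
  by fext; rewrite /l; field; rewrite gt_eqF.
move=> h; rewrite /ratioF ler_pdivrMr //.
have -> : ((f (vadd u (vscale t v)) - f u) / t) * s = l * (f (vadd u (vscale t v)) - f u).
  by rewrite /l; field; rewrite gt_eqF.
move: h; set X := f (vadd u (vscale t v)); lra.
Qed.


Definition lbd (f : vec -> R) (u : vec) :=
  forall v, exists c, forall t, 0 < t -> c <= ratioF f u v t.

Lemma dd_le f u v t : lbd f u -> 0 < t -> dd f u v <= ratioF f u v t.
Proof. move=> lb t0; have [c hc] := lb v; exact: infT_le hc t0. Qed.

Lemma dd_ge f u v x : (forall t, 0 < t -> x <= ratioF f u v t) -> x <= dd f u v.
Proof. by move=> h; apply: le_infT h; exists 1. Qed.

Lemma dd_sublin f u : cvx f -> lbd f u -> sublin (dd f u).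
Proof.
move=> cf lb; split.
- move=> v w.
  have key : forall t1 t2, 0 < t1 -> 0 < t2 ->
      dd f u (vadd v w) <= ratioF f u v t1 + ratioF f u w t2.
    move=> t1 t2 t10 t20; set t := Num.min t1 t2.
    have t0 : 0 < t by rewrite /t lt_min t10 t20.
    have t20' : 0 < t / 2 by rewrite divr_gt0.
    apply: le_trans (dd_le _ lb t20') _.
    apply: (@le_trans _ _ (ratioF f u v t + ratioF f u w t)); last first.
      apply: lerD; apply: ratio_mono => //; rewrite /t ?ge_min ?lexx ?orbT //.
    have h0 : 0 <= (2^-1 : R) by rewrite invr_ge0.
    have h1 : (2^-1 : R) <= 1 by rewrite invf_le1 ?ler1n.
    have := cf (vadd u (vscale t v)) (vadd u (vscale t w)) (2^-1) h0 h1.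
    have -> : (fun j => 2^-1 * vadd u (vscale t v) j + (1 - 2^-1) * vadd u (vscale t w) j)
       = vadd u (vscale (t / 2) (vadd v w)) by fext; field.
    rewrite /ratioF; set F := f (vadd u (vscale (t / 2) (vadd v w))).
    set X := f (vadd u (vscale t v)); set Y := f (vadd u (vscale t w)).
    move=> h.
    have -> : (F - f u) / (t / 2) = (2 * (F - f u)) / t by field; rewrite gt_eqF.
    rewrite -mulrDl ler_pM2r ?invr_gt0 //; lra.
  have h2 : forall t2, 0 < t2 -> dd f u (vadd v w) - ratioF f u w t2 <= dd f u v.
    move=> t2 t20; apply: dd_ge => t1 t10; have := key t1 t2 t10 t20; lra.
  suff : dd f u (vadd v w) - dd f u v <= dd f u w by lra.
  apply: dd_ge => t2 t20; have := h2 t2 t20; lra.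
- move=> s v s0.
  suff : s^-1 * dd f u (vscale s v) <= dd f u v.
    by rewrite -(ler_pM2l s0) mulrA mulfV ?mul1r ?gt_eqF.
  apply: dd_ge => t t0.
  rewrite -(ler_pM2l s0) mulrA mulfV ?mul1r ?gt_eqF //.
  have ts0 : 0 < t / s by rewrite divr_gt0.
  apply: le_trans (dd_le _ lb ts0) _.
  rewrite /ratioF.
  have -> : vadd u (vscale (t / s) (vscale s v)) = vadd u (vscale t v).
    by fext; field; rewrite gt_eqF.
  rewrite le_eqVlt; apply/orP; left; apply/eqP; field.
  by rewrite !gt_eqF.
Qed.

Lemma dd_le_f f u v : lbd f u -> dd f u v <= f (vadd u v) - f u.
Proof.
move=> lb; apply: le_trans (dd_le _ lb ltr01) _; rewrite /ratioF divr1.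
have -> : vadd u (vscale 1 v) = vadd u v by fext; rewrite mul1r.
by [].
Qed.

Lemma subgrad f u d : cvx f -> lbd f u -> exists p : vec,
  (forall x, dot p (fun j => x j - u j) <= f x - f u) /\ dd f u d <= dot p d.
Proof.
move=> cf lb; have [p [hp hd]] := hahn_banach d (dd_sublin cf lb).
exists p; split=> // x; apply: le_trans (hp _) _; apply: le_trans (dd_le_f _ lb) _.
have -> : vadd u (fun j => x j - u j) = x by fext; rewrite addrC subrK.
by [].
Qed.

End DD.

Section Main.
Variables (R : realType) (n : nat).
Notation vec := ('I_n -> R).
Ltac fext := apply: functional_extensionality => ?; rewrite /vadd /vscale /vopp /vzero.

Lemma rec_class_exists (M : 'M[R]_n) (S : {set 'I_n}) i0 :
  (forall i j, 0 <= M i j) -> (forall i, \sum_j M i j = 1) ->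
  (forall i j, i \in S -> M i j != 0 -> j \in S) -> i0 \in S ->
  exists j0, j0 \in S /\ exists F, recurrence_class M F /\ j0 \in F.
Proof.
move=> hpos hsum hS hi0.
set e := mx_graph M.
have cS : forall i j, connect e i j -> i \in S -> j \in S.
  move=> i j /connectP [p pth ->]; elim: p i pth => //= a p IH i /andP [eia pth] iS.
  by apply: IH pth _; exact: hS iS eia.
pose Reach j := [set k | connect e j k].
case: (arg_minnP (fun j => #|Reach j|) (connect0 e i0)) => j0 ci0j0 hmin.
exists j0; split; first exact: cS ci0j0 hi0.
set F := [set k | connect e j0 k && connect e k j0].
have fin : forall i j, i \in F -> M i j != 0 -> j \in F.
  move=> i j; rewrite !inE => /andP [c0i ci0] mij.
  have c0j : connect e j0 j := connect_trans c0i (connect1 (mij : e i j)).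
  rewrite c0j /=.
  have sub : Reach j \subset Reach j0.
    by apply/subsetP => k; rewrite !inE; exact: connect_trans c0j.
  have le : (#|Reach j0| <= #|Reach j|)%N := hmin j (connect_trans ci0j0 c0j).
  have /eqP eq : Reach j == Reach j0 by rewrite eqEcard sub le.
  have : j0 \in Reach j by rewrite eq inE connect0.
  by rewrite inE.
exists F; split; last by rewrite inE connect0 ?andbT.
split; first by split; [exists j0 | exact: fin].
split; first by move=> *; exact: hpos.
move=> i iF; rewrite -(hsum i) [RHS](bigID (fun j => j \in F)) /=.
rewrite [X in _ = _ + X]big1 ?addr0 //.
move=> j jF; apply/eqP; apply: contraNT jF; exact: fin iF.
Qed.


Lemma sum_delta (p : vec) j : \sum_k p k * (k == j)%:R = p j.
Proof.
rewrite (bigD1 j) //= eqxx mulr1 big1 ?addr0 // => k /negbTE ->; by rewrite mulr0.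
Qed.

Lemma subdiff_pos (g : vec -> vec) u M : order_preserving g ->
  subdiff g u M -> forall i j, 0 <= M i j.
Proof.
move=> mono sd i j; have := sd (fun k => u k - (k == j)%:R) i.
have -> : \sum_k M i k * (u k - (k == j)%:R - u k) = - M i j.
  rewrite -(sum_delta (M i) j) -sumrN; apply: eq_bigr => k _.
  by rewrite addrAC subrr add0r mulrN.
have : g (fun k => u k - (k == j)%:R) i <= g u i.
  apply: mono => k; have := ler0n R (k == j); lra.
lra.
Qed.

Lemma subdiff_sum1 (g : vec -> vec) u M : additively_homogeneous g ->
  subdiff g u M -> forall i, \sum_j M i j = 1.
Proof.
move=> hom sd i.
have key : forall l, l * \sum_j M i j <= l.
  move=> l; have := sd (fun k => l + u k) i; rewrite hom.
  have -> : \sum_j M i j * (l + u j - u j) = l * \sum_j M i j.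
    by rewrite mulr_sumr; apply: eq_bigr => k _; rewrite addrK mulrC.
  lra.
have := key 1; have := key (-1); lra.
Qed.

Lemma poscomb (p e : vec) : (forall k, 0 <= p k) -> (forall k, 0 <= e k) ->
  \sum_k p k * e k <= 0 -> forall k, p k != 0 -> e k = 0.
Proof.
move=> hp he hs k pk.
have s0 : \sum_k p k * e k = 0.
  by apply/eqP; rewrite eq_le hs sumr_ge0 // => j _; rewrite mulr_ge0.
have := psumr_eq0P (P := xpredT) (fun j _ => mulr_ge0 (hp j) (he j)) s0 (i := k) isT.
by move/eqP; rewrite mulf_eq0 (negbTE pk) /= => /eqP.
Qed.

Lemma ex_max (f : vec) (j : 'I_n) : exists k, forall i, f i <= f k.
Proof. case: (@arg_maxP _ R _ j xpredT f isT) => k _ h; exists k => i; exact: h. Qed.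

Lemma ex_min (f : vec) (j : 'I_n) : exists k, forall i, f k <= f i.
Proof. case: (@arg_minP _ R _ j xpredT f isT) => k _ h; exists k => i; exact: h. Qed.

Lemma g_lbd (g : vec -> vec) u i : order_preserving g -> additively_homogeneous g ->
  lbd (fun x => g x i) u.
Proof.
move=> mono hom v; exists (- \sum_j `|v j|) => t t0.
rewrite /ratioF ler_pdivlMr //.
have : g (fun j => - (t * \sum_k `|v k|) + u j) i <= g (vadd u (vscale t v)) i.
  apply: mono => j; rewrite /vadd /vscale.
  have h1 : `|v j| <= \sum_k `|v k| by rewrite (bigD1 j) //= lerDl sumr_ge0.
  have h2 : - v j <= `|v j| by rewrite -normrN ler_norm.
  have : t * (- v j) <= t * \sum_k `|v k| by apply: ler_wpM2l; [exact: ltW | lra].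
  lra.
rewrite hom; lra.
Qed.

Lemma mk_M (g : vec -> vec) u (dv : vec) : convex_map g -> order_preserving g ->
  additively_homogeneous g -> exists M : 'M[R]_n, subdiff g u M /\
  forall i, dd (fun x => g x i) u dv <= \sum_j M i j * dv j.
Proof.
move=> cg mono hom.
have h : forall i, exists p : vec,
    (forall x, dot p (fun j => x j - u j) <= g x i - g u i) /\
    dd (fun x => g x i) u dv <= dot p dv.
  move=> i; apply: subgrad; last exact: g_lbd.
  by move=> x y t t0 t1; exact: cg.
have [P hP] := fin_all_exists h.
exists (\matrix_(i, j) P i j); split.
  by move=> x i; under eq_bigr do rewrite mxE; exact: (hP i).1.
by move=> i; under eq_bigr do rewrite mxE; exact: (hP i).2.
Qed.

End Main.

Unset Implicit Arguments.

Theorem lemma3p1 (R : realType) (n : nat) (g : ('I_n -> R) -> ('I_n -> R))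
  (u : 'I_n -> R) (N : {set 'I_n}) :
  convex_map g -> order_preserving g -> additively_homogeneous g ->
  (forall i, g u i = u i) ->
  (forall i, i \in N <-> ~ critical g u i) ->
  exists y : {i : 'I_n | i \in N} -> R,
    (forall k, restr_map g u y k = y k) /\
    (forall z : {i : 'I_n | i \in N} -> R,
       (forall k, restr_map g u z k = z k) -> forall k, z k = y k).
Proof.
move=> cg mono hom hfix Nc.
set y := fun k : {i : 'I_n | i \in N} => u (val k).
have glue_in : forall (z : {i : 'I_n | i \in N} -> R) (w : 'I_n -> R) (k : {i : 'I_n | i \in N}), glue z w (val k) = z k.
  by move=> z w k; rewrite /glue valK.
have glue_out : forall (z : {i : 'I_n | i \in N} -> R) (w : 'I_n -> R) i, i \notin N -> glue z w i = w i.
  by move=> z w i h; rewrite /glue insubN.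
have gyu : glue y u = u.
  apply: functional_extensionality => i; case: (boolP (i \in N)) => iN.
    by rewrite /glue insubT /y.
  by rewrite glue_out.
exists y; split.
  by move=> k; rewrite /restr_map gyu hfix.
move=> z hz.
set x := glue z u.
set d := fun j => x j - u j.
have gx : forall j, j \in N -> g x j = x j.
  move=> j jN; have := hz (exist _ j jN); rewrite /restr_map /= => ->.
  by have := glue_in z u (exist _ j jN).
have dout : forall j, j \notin N -> d j = 0.
  by move=> j jN; rewrite /d /x glue_out // subrr.
have notcrit : forall j0 (M : 'M[R]_n) (S : {set 'I_n}),
    subdiff g u M -> (forall j, j \in S -> j \in N) -> j0 \in S ->
    (forall i j, i \in S -> M i j != 0 -> j \in S) -> False.
  move=> j0 M S sd SN j0S cl.
  have [j1 [j1S [F [rF j1F]]]] :=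
    rec_class_exists (subdiff_pos mono sd) (subdiff_sum1 hom sd) cl j0S.
  have := (Nc j1).1 (SN _ j1S); apply; exists M; split=> //; by exists F.
have dle : forall j, d j <= 0.
  move=> j1; case: (lerP (d j1) 0) => // dpos; exfalso.
  have [jm hm] := ex_max d j1.
  set m := d jm.
  have m0 : 0 < m := lt_le_trans dpos (hm j1).
  pose S := [set j | d j == m].
  have SN : forall j, j \in S -> j \in N.
    move=> j; rewrite inE; case: (boolP (j \in N)) => // jN /eqP.
    by rewrite dout // => h; move: m0; rewrite -h ltxx.
  have [M [sd hM]] := mk_M u d cg mono hom.
  apply: (notcrit jm M S sd SN); first by rewrite inE.
  move=> i j; rewrite inE => /eqP di mij.
  have iN : i \in N by apply: SN; rewrite inE di.
  have xi : x i = u i + m by rewrite -di /d addrC subrK.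
  have ex1 : vadd u (vscale 1 d) = x.
    by apply: functional_extensionality => k; rewrite /vadd /vscale mul1r /d addrC subrK.
  have ub : forall s, 0 <= s -> g (vadd u (vscale s d)) i <= s * m + u i.
    move=> s s0; rewrite -hfix -hom; apply: mono => k; rewrite /vadd /vscale.
    rewrite addrC lerD2r; apply: ler_wpM2l => //.
  have r1 : ratioF (fun x => g x i) u d 1 = m.
    by rewrite /ratioF divr1 ex1 gx // xi hfix addrC addKr.
  have mdd : m <= dd (fun x => g x i) u d.
    apply: dd_ge => t t0; case: (lerP t 1) => t1; last first.
      by rewrite -r1; apply: ratio_mono => //; [move=> a b s s0 s1; exact: cg | exact: ltW].
    have := cg (vadd u (vscale t d)) (vadd u (vscale (1 + t) d)) t (ltW t0) t1 i.
    have -> : (fun j => t * vadd u (vscale t d) j + (1 - t) * vadd u (vscale (1 + t) d) j) = x.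
      rewrite -ex1; apply: functional_extensionality => k; rewrite /vadd /vscale; ring.
    rewrite gx // xi.
    have hB := ub (1 + t) (addr_ge0 ler01 (ltW t0)).
    have hB' : (1 - t) * g (vadd u (vscale (1 + t) d)) i <= (1 - t) * ((1 + t) * m + u i).
      by apply: ler_wpM2l => //; rewrite subr_ge0.
    set A := g (vadd u (vscale t d)) i => hc.
    rewrite /ratioF -/A hfix ler_pdivlMr //.
    have : t * (m * t + u i) <= t * A by nra.
    by rewrite ler_pM2l // lerBrDr.
  have hsum : \sum_k M i k * (m - d k) <= 0.
    have e : \sum_k M i k * (m - d k) = m * \sum_k M i k - \sum_k M i k * d k.
      by rewrite mulr_sumr -sumrB; apply: eq_bigr => k _; ring.
    rewrite e (subdiff_sum1 hom sd) mulr1; have := hM i; lra.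
  have he : forall k, 0 <= m - d k by move=> k; rewrite subr_ge0 hm.
  have := poscomb (fun k => subdiff_pos mono sd i k) he hsum mij.
  by move=> h; rewrite inE; apply/eqP; lra.
have dge : forall j, 0 <= d j.
  move=> j1; case: (lerP 0 (d j1)) => // dneg; exfalso.
  have [jm hm] := ex_min d j1.
  set m := d jm.
  have m0 : m < 0 := le_lt_trans (hm j1) dneg.
  pose S := [set j | d j == m].
  have SN : forall j, j \in S -> j \in N.
    move=> j; rewrite inE; case: (boolP (j \in N)) => // jN /eqP.
    by rewrite dout // => h; move: m0; rewrite -h ltxx.
  have [M [sd _]] := mk_M u d cg mono hom.
  apply: (notcrit jm M S sd SN); first by rewrite inE.
  move=> i j; rewrite inE => /eqP di mij.
  have iN : i \in N by apply: SN; rewrite inE di.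
  have hs := sd x i; rewrite gx // hfix in hs.
  have hsum : \sum_k M i k * (d k - m) <= 0.
    have e : \sum_k M i k * (d k - m) = \sum_k M i k * d k - m * \sum_k M i k.
      by rewrite mulr_sumr -sumrB; apply: eq_bigr => k _; ring.
    rewrite e (subdiff_sum1 hom sd) mulr1.
    have : x i - u i = m by [].
    rewrite /d; lra.
  have he : forall k, 0 <= d k - m by move=> k; rewrite subr_ge0 hm.
  have := poscomb (fun k => subdiff_pos mono sd i k) he hsum mij.
  by move=> h; rewrite inE; apply/eqP; lra.
move=> k.
have h0 : d (val k) = 0 by apply/eqP; rewrite eq_le dle dge.
rewrite /y -(glue_in z u k) -/x; move: h0; rewrite /d; lra.
Qed.
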